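(* Let $N=2$ with $r_{11}=1$ and let $g\in(-2,2)$, $h=\sqrt{1-g^2/4}$, $G=g/h$. For $\varepsilon\in\{1,-1\}$ and $f\in[0,\pi]$ put $$l_\varepsilon(f)=\Big(\varepsilon\,\tfrac1h\sin f\;e^{\frac G2(f-\frac\pi2)},\;\big(\cos f-\tfrac G2\sin f\big)e^{\frac G2(f-\frac\pi2)}\Big).$$ Then for every $f\in[0,\pi]$ the point $l_\varepsilon(f)$ lies on the Finsleroid Indicatrix, i.e. $K(g;l_\varepsilon(f))=1$, and, writing $l_\varepsilon=(l^1,l^2)$, $$\sqrt{\det\big(g_{pq}(g;l_\varepsilon(f))\big)}\;\Big|\,l^2\frac{dl^1}{df}-l^1\frac{dl^2}{df}\Big|=\frac1h .$$ In other words, along the indicatrix the Landsberg angle $\theta$, defined by $d\theta=\sqrt{\det(g_{pq})}\,|R^2dR^1-R^1dR^2|/K^2$, satisfies $d\theta=\frac1h\,df$, so that $f$ equals $h$ times the Landsberg angle.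
   Context: Here $V_2=\mathbb{R}^2$ with points $R=(R^1,R^2)$, $Z=R^2$, $q(R)=|R^1|$. Define $B(g;R)=Z^2+gqZ+q^2$, $A(g;R)=Z+\frac12 gq$, $\Phi(g;R)=\arctan\big(A/(hq)\big)$ if $q>0$, $\Phi=\pi/2$ if $q=0,Z>0$, $\Phi=-\pi/2$ if $q=0,Z<0$; $J(g;R)=e^{\frac12 G\Phi}$ and the Finsleroid metric function $K(g;R)=\sqrt{B(g;R)}\,J(g;R)$ ($K(g;0)=0$). The Finsler metric tensor is $g_{pq}(g;R)=\frac12\,\partial^2K^2(g;R)/\partial R^p\partial R^q$. The Finsleroid Indicatrix is $\{R:K(g;R)=1\}$. *)

(* Defs.v *)
From Stdlib Require Import Reals Lra.
From Coquelicot Require Import Coquelicot.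
Open Scope R_scope.

Definition pt := (R * R)%type.

Definition hh (g : R) : R := sqrt (1 - g ^ 2 / 4).
Definition GG (g : R) : R := g / hh g.

Definition Zc (X : pt) : R := snd X.
Definition qf (X : pt) : R := Rabs (fst X).

Definition Bf (g : R) (X : pt) : R := Zc X ^ 2 + g * qf X * Zc X + qf X ^ 2.
Definition Af (g : R) (X : pt) : R := Zc X + / 2 * g * qf X.

(* Phi; on the remaining point q = 0, Z = 0 (the origin) the value is irrelevant
   since K(g;0) = 0 is set separately. *)
Definition Phi (g : R) (X : pt) : R :=
  if Rlt_dec 0 (qf X) then atan (Af g X / (hh g * qf X))
  else if Rlt_dec 0 (Zc X) then PI / 2
  else - (PI / 2).

Definition Jf (g : R) (X : pt) : R := exp (/ 2 * GG g * Phi g X).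

Definition Kf (g : R) (X : pt) : R :=
  match Req_EM_T (fst X) 0, Req_EM_T (snd X) 0 with
  | left _, left _ => 0
  | _, _ => sqrt (Bf g X) * Jf g X
  end.

Definition partial (p : nat) (F : pt -> R) (X : pt) : R :=
  match p with
  | 1%nat => Derive (fun a => F (a, snd X)) (fst X)
  | _ => Derive (fun b => F (fst X, b)) (snd X)
  end.

Definition gmet (g : R) (p q : nat) (X : pt) : R :=
  / 2 * partial p (partial q (fun Y => Kf g Y ^ 2)) X.

Definition det_gmet (g : R) (X : pt) : R :=
  gmet g 1 1 X * gmet g 2 2 X - gmet g 1 2 X * gmet g 2 1 X.

Definition l1 (g eps f : R) : R :=
  eps * / hh g * sin f * exp (GG g / 2 * (f - PI / 2)).
Definition l2 (g f : R) : R :=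
  (cos f - GG g / 2 * sin f) * exp (GG g / 2 * (f - PI / 2)).
Definition lcurve (g eps f : R) : pt := (l1 g eps f, l2 g f).

(* Main.v *)
Require Import Defs.
From Stdlib Require Import Reals Lra Nsatz.
From Coquelicot Require Import Coquelicot.
Open Scope R_scope.

Lemma loc_of (P : R -> Prop) x d : 0 < d -> (forall y, Rabs (y - x) < d -> P y) -> locally x P.
Proof. intros Hd H. exists (mkposreal d Hd). intros y Hy. apply H. exact Hy. Qed.

Lemma hh_pos g : -2 < g < 2 -> 0 < hh g.
Proof. intros. unfold hh. apply sqrt_lt_R0. nra. Qed.

Lemma hh_sq g : -2 < g < 2 -> hh g * hh g = 1 - g ^ 2 / 4.
Proof. intros. unfold hh. apply sqrt_sqrt. nra. Qed.

Lemma s_sq s : (s = 1 \/ s = -1) -> s * s = 1.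
Proof. intros [-> | ->]; ring. Qed.

Lemma Bf_eq g a b : Bf g (a, b) = b ^ 2 + g * Rabs a * b + a ^ 2.
Proof. unfold Bf, Zc, qf; cbn [fst snd]. rewrite pow2_abs. ring. Qed.

Lemma Bf_pos g a b : -2 < g < 2 -> (a <> 0 \/ b <> 0) -> 0 < Bf g (a, b).
Proof.
  intros Hg Hab. rewrite Bf_eq.
  assert (E: b ^ 2 + g * Rabs a * b + a ^ 2 = (b + g * Rabs a / 2)^2 + (1 - g^2/4) * Rabs a ^ 2).
  { rewrite <- (pow2_abs a). field. }
  rewrite E.
  destruct (Req_dec a 0) as [->|Ha].
  - rewrite Rabs_R0. destruct Hab as [H|H]; [lra|]. 
    assert (0 < b^2) by (apply pow2_gt_0; exact H). 
    replace (b + g * 0 / 2) with b by field. nra.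
  - assert (0 < Rabs a) by (apply Rabs_pos_lt; exact Ha).
    assert (0 < Rabs a ^ 2) by (apply pow_lt; lra).
    assert (0 < 1 - g^2/4) by nra.
    assert (0 <= (b + g * Rabs a / 2)^2) by apply pow2_ge_0. nra.
Qed.

Definition FF g a b := Kf g (a, b) ^ 2.

Lemma FF_eq g a b : -2 < g < 2 -> (a <> 0 \/ b <> 0) ->
  FF g a b = Bf g (a, b) * exp (GG g * Phi g (a, b)).
Proof.
  intros Hg Hab. unfold FF, Kf. cbn [fst snd].
  assert (Hk : (sqrt (Bf g (a, b)) * Jf g (a, b)) ^ 2 = Bf g (a, b) * exp (GG g * Phi g (a, b))).
  { unfold Jf. rewrite Rpow_mult_distr. rewrite pow2_sqrt by (left; apply Bf_pos; auto).
    f_equal. simpl. rewrite Rmult_1_r, <- exp_plus. f_equal. field. }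
  destruct (Req_EM_T a 0); destruct (Req_EM_T b 0); auto.
  exfalso; destruct Hab; auto.
Qed.

Lemma Phi_int g s a b : (s = 1 \/ s = -1) -> 0 < s * a ->
  Phi g (a, b) = atan ((b + / 2 * g * (s * a)) / (hh g * (s * a))).
Proof.
  intros Hs Ha. unfold Phi, Af, qf, Zc; cbn [fst snd].
  assert (Rabs a = s * a) by (destruct Hs; subst; [rewrite Rabs_right|rewrite Rabs_left]; lra).
  rewrite H. destruct (Rlt_dec 0 (s * a)); [reflexivity | lra].
Qed.

Lemma Rabs_s s a : (s = 1 \/ s = -1) -> 0 < s * a -> Rabs a = s * a.
Proof. intros Hs Ha. destruct Hs; subst; [rewrite Rabs_right|rewrite Rabs_left]; lra. Qed.

Lemma loc_s s a : 0 < s * a -> (s = 1 \/ s = -1) -> locally a (fun u => 0 < s * u).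
Proof.
  intros Ha Hs. apply loc_of with (d := s * a); auto.
  intros y Hy. destruct Hs; subst; apply Rabs_def2 in Hy; lra.
Qed.

Ltac side hq := repeat split; try (let Hz := fresh in intro Hz; subst; lra);
  try (let Hz := fresh in intro Hz; lra);
  try (let H' := fresh in assert (H' := Rmult_lt_0_compat _ _ hq hq);
       let Hz := fresh in intro Hz;
       match type of Hz with context [?Y * ?Y] => pose proof (Rle_0_sqr Y); unfold Rsqr in *; lra end).

Lemma sq_s s u : (s = 1 \/ s = -1) -> (s * u) ^ 2 = u ^ 2.
Proof. intros [-> | ->]; ring. Qed.

Lemma FF_int g s u b : -2 < g < 2 -> (s = 1 \/ s = -1) -> 0 < s * u ->
  FF g u b = (b^2 + g*(s*u)*b + (s*u)^2) * exp (g / hh g * atan ((b + /2*g*(s*u))/(hh g*(s*u)))).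
Proof.
  intros Hg Hs Hu. rewrite FF_eq; auto.
  - rewrite Bf_eq, (Rabs_s s u), (Phi_int g s u b), sq_s; auto.
  - left; intro; subst; lra.
Qed.

Lemma dF1_int (g s a b : R) : -2 < g < 2 -> (s = 1 \/ s = -1) -> 0 < s * a ->
  is_derive (fun u => FF g u b) a (2 * a * exp (GG g * Phi g (a, b))).
Proof.
  intros Hg Hs Ha.
  apply is_derive_ext_loc with (f := fun u => (b^2 + g*(s*u)*b + (s*u)^2) * exp (g / hh g * atan ((b + /2*g*(s*u))/(hh g*(s*u))))).
  - eapply filter_imp; [|apply (loc_s s a Ha Hs)]. intros u Hu. symmetry. apply FF_int; auto.
  - rewrite (Phi_int g s a b) by auto. unfold GG.
    pose proof (hh_pos g Hg) as hp. pose proof (hh_sq g Hg) as Hh. pose proof (s_sq s Hs) as Hs2.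
    assert (hq : 0 < hh g * (s * a)) by (apply Rmult_lt_0_compat; lra).
    auto_derive; [lra|].
    set (E := exp _). set (h := hh g) in *. clearbody E h.
    field_simplify_eq.
    + assert (Hh4: 4*(h*h) = 4 - g*g) by lra. clear -Hh4 Hs2. cbn [pow]. nsatz.
    + side hq.
Qed.

Lemma Phi_int' g s (p : pt) : (s = 1 \/ s = -1) -> 0 < s * fst p ->
  Phi g p = atan ((snd p + / 2 * g * (s * fst p)) / (hh g * (s * fst p))).
Proof. destruct p as [a b]. apply Phi_int. Qed.

Lemma B_int g s a b : -2 < g < 2 -> (s = 1 \/ s = -1) -> 0 < s * a ->
  0 < b^2 + g*(s*a)*b + a^2 /\ 0 < b^2 + g*(s*a)*b + (s*a)^2.
Proof.
  intros Hg Hs Ha. rewrite sq_s by auto.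
  assert (Ha0 : a <> 0) by (intro Hz; subst; lra).
  pose proof (Bf_pos g a b Hg (or_introl Ha0)) as H.
  rewrite Bf_eq, (Rabs_s s a) in H by auto. lra.
Qed.

Ltac int_tac g s a Hg Hs Ha :=
  let HB := fresh "HB" in
  match goal with |- is_derive _ ?x _ => idtac end;
  let hp := fresh "hp" in let Hh := fresh "Hh" in let Hs2 := fresh "Hs2" in
  let hq := fresh "hq" in
  pose proof (hh_pos g Hg) as hp; pose proof (hh_sq g Hg) as Hh; pose proof (s_sq s Hs) as Hs2;
  assert (hq : 0 < hh g * (s * a)) by (apply Rmult_lt_0_compat; lra);
  match goal with |- context [exp (_ * atan ((?bb + _) / _))] => pose proof (B_int g s a bb Hg Hs Ha) as HB end;
  auto_derive; [ side hq | ];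
  let E := fresh "E" in let h := fresh "h" in
  set (E := exp _); set (h := hh g) in *; clearbody E h;
  field_simplify_eq; [ let Hh4 := fresh in assert (Hh4: 4*(h*h) = 4 - g*g) by lra; clear -Hh4 Hs2; cbn [pow]; nsatz | side hq ].

Lemma dF2_int (g s a b : R) : -2 < g < 2 -> (s = 1 \/ s = -1) -> 0 < s * a ->
  is_derive (fun v => FF g a v) b (2 * (b + g * Rabs a) * exp (GG g * Phi g (a, b))).
Proof.
  intros Hg Hs Ha.
  apply is_derive_ext with (f := fun v => (v^2 + g*(s*a)*v + (s*a)^2) * exp (g / hh g * atan ((v + /2*g*(s*a))/(hh g*(s*a))))).
  - intros v. symmetry. apply FF_int; auto.
  - rewrite (Phi_int g s a b), (Rabs_s s a) by auto. unfold GG. int_tac g s a Hg Hs Ha.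
Qed.

Lemma d11_int (g s a b : R) : -2 < g < 2 -> (s = 1 \/ s = -1) -> 0 < s * a ->
  is_derive (fun u => 2 * u * exp (GG g * Phi g (u, b))) a
    (2 * exp (GG g * Phi g (a, b)) * (1 - g * Rabs a * b / (b^2 + g * Rabs a * b + a^2))).
Proof.
  intros Hg Hs Ha.
  apply is_derive_ext_loc with (f := fun u => 2 * u * exp (g / hh g * atan ((b + /2*g*(s*u))/(hh g*(s*u))))).
  - eapply filter_imp; [|apply (loc_s s a Ha Hs)]. intros u Hu. rewrite (Phi_int' g s) by (cbn [fst]; auto). cbn [fst snd]. reflexivity.
  - rewrite (Phi_int g s a b), (Rabs_s s a) by auto. unfold GG. int_tac g s a Hg Hs Ha.
Qed.

Lemma d12_int (g s a b : R) : -2 < g < 2 -> (s = 1 \/ s = -1) -> 0 < s * a ->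
  is_derive (fun v => 2 * a * exp (GG g * Phi g (a, v))) b
    (2 * exp (GG g * Phi g (a, b)) * (g * a * Rabs a / (b^2 + g * Rabs a * b + a^2))).
Proof.
  intros Hg Hs Ha.
  apply is_derive_ext with (f := fun v => 2 * a * exp (g / hh g * atan ((v + /2*g*(s*a))/(hh g*(s*a))))).
  - intros v. rewrite (Phi_int' g s) by (cbn [fst]; auto). cbn [fst snd]. reflexivity.
  - rewrite (Phi_int g s a b), (Rabs_s s a) by auto. unfold GG. int_tac g s a Hg Hs Ha.
Qed.

Lemma d21_int (g s a b : R) : -2 < g < 2 -> (s = 1 \/ s = -1) -> 0 < s * a ->
  is_derive (fun u => 2 * (b + g * Rabs u) * exp (GG g * Phi g (u, b))) a
    (2 * exp (GG g * Phi g (a, b)) * (g * a * Rabs a / (b^2 + g * Rabs a * b + a^2))).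
Proof.
  intros Hg Hs Ha.
  apply is_derive_ext_loc with (f := fun u => 2 * (b + g * (s * u)) * exp (g / hh g * atan ((b + /2*g*(s*u))/(hh g*(s*u))))).
  - eapply filter_imp; [|apply (loc_s s a Ha Hs)]. intros u Hu. rewrite (Phi_int' g s), (Rabs_s s u) by (cbn [fst]; auto). cbn [fst snd]. reflexivity.
  - rewrite (Phi_int g s a b), (Rabs_s s a) by auto. unfold GG. int_tac g s a Hg Hs Ha.
Qed.

Lemma d22_int (g s a b : R) : -2 < g < 2 -> (s = 1 \/ s = -1) -> 0 < s * a ->
  is_derive (fun v => 2 * (v + g * Rabs a) * exp (GG g * Phi g (a, v))) b
    (2 * exp (GG g * Phi g (a, b)) * (1 + g * Rabs a * (b + g * Rabs a) / (b^2 + g * Rabs a * b + a^2))).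
Proof.
  intros Hg Hs Ha.
  apply is_derive_ext with (f := fun v => 2 * (v + g * (s * a)) * exp (g / hh g * atan ((v + /2*g*(s*a))/(hh g*(s*a))))).
  - intros v. rewrite (Phi_int' g s), (Rabs_s s a) by (cbn [fst]; auto). cbn [fst snd]. reflexivity.
  - rewrite (Phi_int g s a b), (Rabs_s s a) by auto. unfold GG. int_tac g s a Hg Hs Ha.
Qed.

Lemma kink (psi phi : R -> R) : is_derive psi 0 0 ->
  locally 0 (fun t => psi (Rabs t) = phi t) -> is_derive phi 0 0.
Proof.
  intros Hd Hl. apply (is_derive_ext_loc (fun t => psi (Rabs t))); [exact Hl|].
  apply is_derive_Reals. apply is_derive_Reals in Hd.
  intros eps Heps. destruct (Hd eps Heps) as [del Hdel]. exists del. intros hx Hhx Hlt.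
  assert (Hz : Rabs hx <> 0) by (apply Rabs_no_R0; exact Hhx).
  assert (Hl2 : Rabs (Rabs hx) < del) by (rewrite Rabs_Rabsolu; exact Hlt).
  specialize (Hdel (Rabs hx) Hz Hl2).
  rewrite Rplus_0_l, Rabs_R0 in *. rewrite Rminus_0_r in *.
  unfold Rdiv in *. rewrite Rabs_mult, Rabs_inv in *. rewrite Rabs_Rabsolu in Hdel. exact Hdel.
Qed.

Lemma tk (k phi : R -> R) : continuous k 0 ->
  locally 0 (fun t => t * k t = phi t) -> is_derive phi 0 (k 0).
Proof.
  intros Hc Hl. apply (is_derive_ext_loc (fun t => t * k t)); [exact Hl|].
  apply is_derive_Reals. apply continuity_pt_filterlim in Hc.
  unfold continuity_pt, continue_in, limit1_in, limit_in in Hc.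
  intros eps Heps. destruct (Hc eps Heps) as [al [Hal H]]. exists (mkposreal al Hal).
  intros hx Hhx Hlt. simpl in Hlt.
  replace (((0+hx)*k(0+hx) - 0*k 0)/hx - k 0) with (k hx - k 0) by (rewrite Rplus_0_l; field; auto).
  apply (H hx). split.
  - split; [exact I | auto].
  - simpl. unfold R_dist. rewrite Rminus_0_r. exact Hlt.
Qed.

Lemma Phi_axis g sg (p : pt) : -2 < g < 2 -> (sg = 1 \/ sg = -1) -> 0 < sg * snd p ->
  Rabs (fst p) < Rabs (snd p) / 2 ->
  Phi g p = sg * (PI / 2) - atan (hh g * Rabs (fst p) / (snd p + / 2 * g * Rabs (fst p))).
Proof.
  destruct p as [t b]. cbn [fst snd]. intros Hg Hsg Hb Ht.
  pose proof (hh_pos g Hg) as hp.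
  pose proof (Rabs_pos t) as Hq.
  unfold Phi, Af, qf, Zc; cbn [fst snd].
  set (q := Rabs t) in *.
  destruct (Rlt_dec 0 q) as [Hq0|Hq0].
  - destruct Hsg as [-> | ->].
    + rewrite Rabs_right in Ht by lra.
      assert (HA : 0 < b + / 2 * g * q) by nra.
      assert (Hx : 0 < hh g * q / (b + / 2 * g * q)).
      { apply Rdiv_lt_0_compat; [apply Rmult_lt_0_compat|]; lra. }
      replace ((b + / 2 * g * q) / (hh g * q)) with (/ (hh g * q / (b + / 2 * g * q))) by (field; lra).
      rewrite atan_inv by exact Hx. ring.
    + rewrite Rabs_left in Ht by lra.
      assert (HA : b + / 2 * g * q < 0) by nra.
      assert (Hx : 0 < hh g * q / - (b + / 2 * g * q)).
      { apply Rdiv_lt_0_compat; [apply Rmult_lt_0_compat|]; lra. }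
      replace ((b + / 2 * g * q) / (hh g * q)) with (- / (hh g * q / - (b + / 2 * g * q))) by (field; lra).
      rewrite atan_opp, atan_inv by exact Hx.
      replace (hh g * q / - (b + / 2 * g * q)) with (- (hh g * q / (b + / 2 * g * q))) by (field; lra).
      rewrite atan_opp. ring.
  - assert (q = 0) as -> by lra.
    replace (hh g * 0 / (b + / 2 * g * 0)) with 0 by (field; destruct Hsg; subst; lra).
    rewrite atan_0.
    destruct Hsg as [-> | ->]; destruct (Rlt_dec 0 b); lra.
Qed.

Lemma loc_axis (b : R) : b <> 0 -> locally 0 (fun t => Rabs t < Rabs b / 2).
Proof.
  intros Hb. apply loc_of with (d := Rabs b / 2).
  - pose proof (Rabs_pos_lt b Hb). lra.
  - intros y Hy. rewrite Rminus_0_r in Hy. exact Hy.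
Qed.

Lemma sg_b_nz sg b : (sg = 1 \/ sg = -1) -> 0 < sg * b -> b <> 0.
Proof. intros Hs Hb Hz. subst. lra. Qed.

Ltac ax_tac g sg b Hg Hsg Hb :=
  let hp := fresh "hp" in let Hh := fresh "Hh" in let Hs2 := fresh "Hs2" in
  pose proof (hh_pos g Hg) as hp; pose proof (hh_sq g Hg) as Hh; pose proof (s_sq sg Hsg) as Hs2;
  let bnz := fresh "bnz" in pose proof (sg_b_nz sg b Hsg Hb) as bnz;
  auto_derive; [ repeat split; try lra; try (rewrite Rmult_0_r, Rplus_0_r; exact bnz); try (rewrite Rmult_0_r, Rmult_0_r, Rplus_0_r; exact bnz) | ];
  let E := fresh "E" in let h := fresh "h" in
  set (E := exp _); set (h := hh g) in *; clearbody E h;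
  field_simplify_eq; [ try (let Hh4 := fresh in assert (Hh4: 4*(h*h) = 4 - g*g) by lra; clear -Hh4 Hs2; cbn [pow]; nsatz) | repeat split; lra ].

Lemma psi1_d g sg b : -2 < g < 2 -> (sg = 1 \/ sg = -1) -> 0 < sg * b ->
  is_derive (fun q => (b^2 + g*q*b + q^2) * exp (g / hh g * (sg * (PI/2) - atan (hh g * q / (b + /2*g*q))))) 0 0.
Proof. intros Hg Hsg Hb. ax_tac g sg b Hg Hsg Hb. Qed.

Lemma psi2_d g sg b : -2 < g < 2 -> (sg = 1 \/ sg = -1) -> 0 < sg * b ->
  is_derive (fun q => 2 * (b + g*q) * exp (g / hh g * (sg * (PI/2) - atan (hh g * q / (b + /2*g*q))))) 0 0.
Proof. intros Hg Hsg Hb. ax_tac g sg b Hg Hsg Hb. Qed.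

Lemma Phi_axis0 g sg b : -2 < g < 2 -> (sg = 1 \/ sg = -1) -> 0 < sg * b ->
  Phi g (0, b) = sg * (PI / 2).
Proof.
  intros Hg Hsg Hb. rewrite (Phi_axis g sg) by (cbn [fst snd]; auto; rewrite Rabs_R0; pose proof (Rabs_pos_lt b (sg_b_nz sg b Hsg Hb)); lra).
  cbn [fst snd]. rewrite Rabs_R0, Rmult_0_r, Rdiv_0_l, atan_0. ring.
Qed.

Lemma Phi_axis0' g sg (p : pt) : -2 < g < 2 -> (sg = 1 \/ sg = -1) -> fst p = 0 -> 0 < sg * snd p ->
  Phi g p = sg * (PI / 2).
Proof. destruct p as [a b]; cbn [fst snd]; intros; subst; apply Phi_axis0; auto. Qed.

Lemma dF1_axis (g sg b : R) : -2 < g < 2 -> (sg = 1 \/ sg = -1) -> 0 < sg * b ->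
  is_derive (fun u => FF g u b) 0 (2 * 0 * exp (GG g * Phi g (0, b))).
Proof.
  intros Hg Hsg Hb. rewrite !Rmult_0_r, Rmult_0_l.
  pose proof (sg_b_nz sg b Hsg Hb) as bnz.
  apply (kink _ _ (psi1_d g sg b Hg Hsg Hb)).
  eapply filter_imp; [|apply (loc_axis b bnz)]. intros t Ht.
  rewrite FF_eq by first [exact Hg | right; exact bnz]. rewrite Bf_eq.
  rewrite (Phi_axis g sg) by (cbn [fst snd]; auto). cbn [fst snd]. unfold GG.
  rewrite <- (pow2_abs t). reflexivity.
Qed.

Lemma dF2_axis (g sg b : R) : -2 < g < 2 -> (sg = 1 \/ sg = -1) -> 0 < sg * b ->
  is_derive (fun v => FF g 0 v) b (2 * (b + g * Rabs 0) * exp (GG g * Phi g (0, b))).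
Proof.
  intros Hg Hsg Hb.
  rewrite (Phi_axis0 g sg b) by auto. rewrite Rabs_R0, Rmult_0_r, Rplus_0_r.
  apply is_derive_ext_loc with (f := fun v => v ^ 2 * exp (GG g * (sg * (PI / 2)))).
  - eapply filter_imp; [|apply (loc_s sg b Hb Hsg)]. intros v Hv.
    rewrite FF_eq by first [exact Hg | right; exact (sg_b_nz sg v Hsg Hv)]. rewrite Bf_eq, (Phi_axis0' g sg) by (cbn [fst snd]; auto).
    rewrite Rabs_R0. f_equal. ring.
  - auto_derive; [exact I|]. ring.
Qed.

Lemma d12_axis (g sg b : R) : -2 < g < 2 -> (sg = 1 \/ sg = -1) -> 0 < sg * b ->
  is_derive (fun v => 2 * 0 * exp (GG g * Phi g (0, v))) b
    (2 * exp (GG g * Phi g (0, b)) * (g * 0 * Rabs 0 / (b^2 + g * Rabs 0 * b + 0^2))).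
Proof.
  intros Hg Hsg Hb.
  apply is_derive_ext with (f := fun v => 0).
  - intros v. rewrite Rmult_0_r, Rmult_0_l. reflexivity.
  - replace (2 * exp (GG g * Phi g (0, b)) * (g * 0 * Rabs 0 / (b^2 + g * Rabs 0 * b + 0^2))) with (@zero R_NormedModule).
    + apply is_derive_const.
    + unfold zero; simpl. field. pose proof (sg_b_nz sg b Hsg Hb). rewrite Rabs_R0. 
      intro Hz. apply H. nra.
Qed.

Lemma d22_axis (g sg b : R) : -2 < g < 2 -> (sg = 1 \/ sg = -1) -> 0 < sg * b ->
  is_derive (fun v => 2 * (v + g * Rabs 0) * exp (GG g * Phi g (0, v))) b
    (2 * exp (GG g * Phi g (0, b)) * (1 + g * Rabs 0 * (b + g * Rabs 0) / (b^2 + g * Rabs 0 * b + 0^2))).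
Proof.
  intros Hg Hsg Hb.
  rewrite (Phi_axis0 g sg b) by auto.
  apply is_derive_ext_loc with (f := fun v => 2 * v * exp (GG g * (sg * (PI / 2)))).
  - eapply filter_imp; [|apply (loc_s sg b Hb Hsg)]. intros v Hv.
    rewrite (Phi_axis0' g sg) by (cbn [fst snd]; auto). rewrite Rabs_R0, Rmult_0_r, Rplus_0_r. reflexivity.
  - pose proof (sg_b_nz sg b Hsg Hb). rewrite Rabs_R0.
    replace (2 * exp (GG g * (sg * (PI / 2))) * (1 + g * 0 * (b + g * 0) / (b ^ 2 + g * 0 * b + 0 ^ 2)))
      with (2 * exp (GG g * (sg * (PI / 2)))) by (field; intro Hz; apply H; nra).
    auto_derive; [exact I|]. ring.
Qed.

Lemma d11_axis (g sg b : R) : -2 < g < 2 -> (sg = 1 \/ sg = -1) -> 0 < sg * b ->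
  is_derive (fun u => 2 * u * exp (GG g * Phi g (u, b))) 0
    (2 * exp (GG g * Phi g (0, b)) * (1 - g * Rabs 0 * b / (b^2 + g * Rabs 0 * b + 0^2))).
Proof.
  intros Hg Hsg Hb. pose proof (sg_b_nz sg b Hsg Hb) as bnz.
  set (K0 := fun q => 2 * exp (g / hh g * (sg * (PI/2) - atan (hh g * q / (b + /2*g*q))))).
  replace (2 * exp (GG g * Phi g (0, b)) * (1 - g * Rabs 0 * b / (b^2 + g * Rabs 0 * b + 0^2)))
    with ((fun t => K0 (Rabs t)) 0).
  2: { cbv beta. unfold K0. cbv beta. rewrite (Phi_axis0 g sg b) by auto. rewrite Rabs_R0, !Rmult_0_r, Rplus_0_r, Rdiv_0_l, atan_0.
       unfold GG. rewrite Rminus_0_r. field. exact bnz. }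
  apply (tk (fun t => K0 (Rabs t))).
  - apply continuous_comp; [apply continuous_Rabs|].
    apply (@ex_derive_continuous R_AbsRing R_NormedModule K0). rewrite Rabs_R0. unfold K0.
    pose proof (hh_pos g Hg). auto_derive. intro Hz; apply bnz; lra.
  - eapply filter_imp; [|apply (loc_axis b bnz)]. intros t Ht. unfold K0.
    rewrite (Phi_axis g sg) by (cbn [fst snd]; auto). cbn [fst snd]. unfold GG. ring.
Qed.

Lemma d21_axis (g sg b : R) : -2 < g < 2 -> (sg = 1 \/ sg = -1) -> 0 < sg * b ->
  is_derive (fun u => 2 * (b + g * Rabs u) * exp (GG g * Phi g (u, b))) 0
    (2 * exp (GG g * Phi g (0, b)) * (g * 0 * Rabs 0 / (b^2 + g * Rabs 0 * b + 0^2))).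
Proof.
  intros Hg Hsg Hb. pose proof (sg_b_nz sg b Hsg Hb) as bnz.
  replace (2 * exp (GG g * Phi g (0, b)) * (g * 0 * Rabs 0 / (b^2 + g * Rabs 0 * b + 0^2))) with 0
    by (rewrite Rabs_R0; field; intro Hz; apply bnz; nra).
  apply (kink _ _ (psi2_d g sg b Hg Hsg Hb)).
  eapply filter_imp; [|apply (loc_axis b bnz)]. intros t Ht.
  rewrite (Phi_axis g sg) by (cbn [fst snd]; auto). cbn [fst snd]. unfold GG. reflexivity.
Qed.

Lemma sign_ex x : x <> 0 -> exists s, (s = 1 \/ s = -1) /\ 0 < s * x.
Proof.
  intros Hx. destruct (Rlt_dec 0 x).
  - exists 1. split; [left; reflexivity | lra].
  - exists (-1). split; [right; reflexivity | ]. assert (x < 0) by lra. lra.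
Qed.

Ltac cases_ab a b Hab :=
  destruct (Req_dec a 0) as [Ha0 | Ha0];
  [ subst a; let Hb := fresh in assert (Hb : b <> 0) by (destruct Hab; [contradiction|assumption]);
    let sg := fresh "sg" in let Hsg := fresh "Hsg" in let Hsb := fresh "Hsb" in
    destruct (sign_ex b Hb) as [sg [Hsg Hsb]]
  | let s := fresh "s" in let Hs := fresh "Hs" in let Hsa := fresh "Hsa" in
    destruct (sign_ex a Ha0) as [s [Hs Hsa]] ].

Lemma dF1_all (g a b : R) : -2 < g < 2 -> (a <> 0 \/ b <> 0) ->
  is_derive (fun u => FF g u b) a (2 * a * exp (GG g * Phi g (a, b))).
Proof. intros Hg Hab. cases_ab a b Hab; [eapply dF1_axis | eapply dF1_int]; eauto. Qed.

Lemma dF2_all (g a b : R) : -2 < g < 2 -> (a <> 0 \/ b <> 0) ->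
  is_derive (fun v => FF g a v) b (2 * (b + g * Rabs a) * exp (GG g * Phi g (a, b))).
Proof. intros Hg Hab. cases_ab a b Hab; [eapply dF2_axis | eapply dF2_int]; eauto. Qed.

Lemma d11_all (g a b : R) : -2 < g < 2 -> (a <> 0 \/ b <> 0) ->
  is_derive (fun u => 2 * u * exp (GG g * Phi g (u, b))) a
    (2 * exp (GG g * Phi g (a, b)) * (1 - g * Rabs a * b / (b^2 + g * Rabs a * b + a^2))).
Proof. intros Hg Hab. cases_ab a b Hab; [eapply d11_axis | eapply d11_int]; eauto. Qed.

Lemma d12_all (g a b : R) : -2 < g < 2 -> (a <> 0 \/ b <> 0) ->
  is_derive (fun v => 2 * a * exp (GG g * Phi g (a, v))) b
    (2 * exp (GG g * Phi g (a, b)) * (g * a * Rabs a / (b^2 + g * Rabs a * b + a^2))).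
Proof. intros Hg Hab. cases_ab a b Hab; [eapply d12_axis | eapply d12_int]; eauto. Qed.

Lemma d21_all (g a b : R) : -2 < g < 2 -> (a <> 0 \/ b <> 0) ->
  is_derive (fun u => 2 * (b + g * Rabs u) * exp (GG g * Phi g (u, b))) a
    (2 * exp (GG g * Phi g (a, b)) * (g * a * Rabs a / (b^2 + g * Rabs a * b + a^2))).
Proof. intros Hg Hab. cases_ab a b Hab; [eapply d21_axis | eapply d21_int]; eauto. Qed.

Lemma d22_all (g a b : R) : -2 < g < 2 -> (a <> 0 \/ b <> 0) ->
  is_derive (fun v => 2 * (v + g * Rabs a) * exp (GG g * Phi g (a, v))) b
    (2 * exp (GG g * Phi g (a, b)) * (1 + g * Rabs a * (b + g * Rabs a) / (b^2 + g * Rabs a * b + a^2))).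
Proof. intros Hg Hab. cases_ab a b Hab; [eapply d22_axis | eapply d22_int]; eauto. Qed.

Definition KK g := fun Y : pt => Kf g Y ^ 2.

Lemma P1_all (g a b : R) : -2 < g < 2 -> (a <> 0 \/ b <> 0) ->
  partial 1 (KK g) (a, b) = 2 * a * exp (GG g * Phi g (a, b)).
Proof.
  intros Hg Hab. unfold partial; cbn [fst snd].
  apply is_derive_unique. exact (dF1_all g a b Hg Hab).
Qed.

Lemma P2_all (g a b : R) : -2 < g < 2 -> (a <> 0 \/ b <> 0) ->
  partial 2 (KK g) (a, b) = 2 * (b + g * Rabs a) * exp (GG g * Phi g (a, b)).
Proof.
  intros Hg Hab. unfold partial; cbn [fst snd].
  apply is_derive_unique. exact (dF2_all g a b Hg Hab).
Qed.

Lemma loc_nz1 a b : (a <> 0 \/ b <> 0) -> locally a (fun u => u <> 0 \/ b <> 0).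
Proof.
  intros [Ha | Hb].
  - destruct (sign_ex a Ha) as [s [Hs Hsa]]. eapply filter_imp; [|apply (loc_s s a Hsa Hs)].
    intros u Hu. left. intro Hz. rewrite Hz in Hu. lra.
  - apply filter_forall. intros; right; exact Hb.
Qed.

Lemma loc_nz2 a b : (a <> 0 \/ b <> 0) -> locally b (fun v => a <> 0 \/ v <> 0).
Proof.
  intros [Ha | Hb].
  - apply filter_forall. intros; left; exact Ha.
  - destruct (sign_ex b Hb) as [s [Hs Hsb]]. eapply filter_imp; [|apply (loc_s s b Hsb Hs)].
    intros u Hu. right. intro Hz. rewrite Hz in Hu. lra.
Qed.

Lemma Dloc (f g : R -> R) x l : locally x (fun t => g t = f t) -> is_derive g x l -> Derive f x = l.
Proof. intros H Hd. apply is_derive_unique. apply (is_derive_ext_loc g f); auto. Qed.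

Definition BB g a b := b^2 + g * Rabs a * b + a^2.
Definition EE g a b := exp (GG g * Phi g (a, b)).

Lemma G11 (g a b : R) : -2 < g < 2 -> (a <> 0 \/ b <> 0) ->
  gmet g 1 1 (a, b) = EE g a b * (1 - g * Rabs a * b / BB g a b).
Proof.
  intros Hg Hab. unfold gmet. change (partial 1 (partial 1 (fun Y => Kf g Y ^ 2)) (a, b))
    with (Derive (fun u => partial 1 (KK g) (u, b)) a).
  assert (Hl : locally a (fun (u : R) => 2 * u * exp (GG g * Phi g (u, b)) = partial 1 (KK g) (u, b))).
  { eapply filter_imp; [|apply (loc_nz1 a b Hab)]. intros u Hu. symmetry; apply P1_all; auto. }
  rewrite (Dloc _ _ _ _ Hl (d11_all g a b Hg Hab)).
  unfold EE, BB. field.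
    pose proof (Bf_pos g a b Hg Hab). rewrite Bf_eq in H. lra.
Qed.

Lemma G12 (g a b : R) : -2 < g < 2 -> (a <> 0 \/ b <> 0) ->
  gmet g 1 2 (a, b) = EE g a b * (g * a * Rabs a / BB g a b).
Proof.
  intros Hg Hab. unfold gmet. change (partial 1 (partial 2 (fun Y => Kf g Y ^ 2)) (a, b))
    with (Derive (fun u => partial 2 (KK g) (u, b)) a).
  assert (Hl : locally a (fun (u : R) => 2 * (b + g * Rabs u) * exp (GG g * Phi g (u, b)) = partial 2 (KK g) (u, b))).
  { eapply filter_imp; [|apply (loc_nz1 a b Hab)]. intros u Hu. symmetry; apply P2_all; auto. }
  rewrite (Dloc _ _ _ _ Hl (d21_all g a b Hg Hab)).
  unfold EE, BB. field.
    pose proof (Bf_pos g a b Hg Hab). rewrite Bf_eq in H. lra.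
Qed.

Lemma G21 (g a b : R) : -2 < g < 2 -> (a <> 0 \/ b <> 0) ->
  gmet g 2 1 (a, b) = EE g a b * (g * a * Rabs a / BB g a b).
Proof.
  intros Hg Hab. unfold gmet. change (partial 2 (partial 1 (fun Y => Kf g Y ^ 2)) (a, b))
    with (Derive (fun v => partial 1 (KK g) (a, v)) b).
  assert (Hl : locally b (fun (v : R) => 2 * a * exp (GG g * Phi g (a, v)) = partial 1 (KK g) (a, v))).
  { eapply filter_imp; [|apply (loc_nz2 a b Hab)]. intros v Hv. symmetry; apply P1_all; auto. }
  rewrite (Dloc _ _ _ _ Hl (d12_all g a b Hg Hab)).
  unfold EE, BB. field.
    pose proof (Bf_pos g a b Hg Hab). rewrite Bf_eq in H. lra.
Qed.

Lemma G22 (g a b : R) : -2 < g < 2 -> (a <> 0 \/ b <> 0) ->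
  gmet g 2 2 (a, b) = EE g a b * (1 + g * Rabs a * (b + g * Rabs a) / BB g a b).
Proof.
  intros Hg Hab. unfold gmet. change (partial 2 (partial 2 (fun Y => Kf g Y ^ 2)) (a, b))
    with (Derive (fun v => partial 2 (KK g) (a, v)) b).
  assert (Hl : locally b (fun (v : R) => 2 * (v + g * Rabs a) * exp (GG g * Phi g (a, v)) = partial 2 (KK g) (a, v))).
  { eapply filter_imp; [|apply (loc_nz2 a b Hab)]. intros v Hv. symmetry; apply P2_all; auto. }
  rewrite (Dloc _ _ _ _ Hl (d22_all g a b Hg Hab)).
  unfold EE, BB. field.
    pose proof (Bf_pos g a b Hg Hab). rewrite Bf_eq in H. lra.
Qed.

Lemma det_all (g a b : R) : -2 < g < 2 -> (a <> 0 \/ b <> 0) ->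
  det_gmet g (a, b) = EE g a b ^ 2.
Proof.
  intros Hg Hab. unfold det_gmet. rewrite G11, G12, G21, G22 by auto.
  pose proof (Bf_pos g a b Hg Hab) as HB. rewrite Bf_eq in HB. fold (BB g a b) in HB.
  assert (Hq : Rabs a * Rabs a = a * a) by (rewrite <- Rabs_mult; apply Rabs_right; nra).
  unfold BB in *. set (q := Rabs a) in *. set (E := EE g a b). clearbody q E.
  field_simplify_eq; [ clear -Hq; cbn [pow]; nsatz | lra ].
Qed.

Lemma curve_q g eps f : -2 < g < 2 -> (eps = 1 \/ eps = -1) -> 0 <= f <= PI ->
  Rabs (l1 g eps f) = / hh g * sin f * exp (GG g / 2 * (f - PI / 2)).
Proof.
  intros Hg He Hf. unfold l1.
  pose proof (hh_pos g Hg). pose proof (sin_ge_0 f (proj1 Hf) (proj2 Hf)).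
  pose proof (exp_pos (GG g / 2 * (f - PI / 2))).
  assert (0 <= / hh g * sin f * exp (GG g / 2 * (f - PI / 2))).
  { apply Rmult_le_pos; [apply Rmult_le_pos|]; try lra. left; apply Rinv_0_lt_compat; lra. }
  destruct He as [-> | ->].
  - rewrite Rabs_right; lra.
  - replace (-1 * / hh g * sin f * exp (GG g / 2 * (f - PI / 2)))
      with (- (/ hh g * sin f * exp (GG g / 2 * (f - PI / 2)))) by ring.
    rewrite Rabs_Ropp, Rabs_right; lra.
Qed.

Lemma curve_B g eps f : -2 < g < 2 -> (eps = 1 \/ eps = -1) -> 0 <= f <= PI ->
  BB g (l1 g eps f) (l2 g f) = exp (GG g / 2 * (f - PI / 2)) ^ 2.
Proof.
  intros Hg He Hf. unfold BB. rewrite curve_q by auto.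
  pose proof (hh_pos g Hg) as hp. pose proof (hh_sq g Hg) as Hh. pose proof (s_sq eps He) as He2.
  pose proof (sin2_cos2 f) as Hsc. unfold Rsqr in Hsc.
  unfold l1, l2, GG. set (E := exp _). set (s := sin f) in *. set (c := cos f) in *. set (h := hh g) in *.
  clearbody E s c h.
  field_simplify_eq; [| lra].
  assert (Hh4: 4*(h*h) = 4 - g*g) by lra. clear -Hh4 He2 Hsc. cbn [pow]. nsatz.
Qed.

Lemma curve_Phi g eps f : -2 < g < 2 -> (eps = 1 \/ eps = -1) -> 0 <= f <= PI ->
  Phi g (l1 g eps f, l2 g f) = PI / 2 - f.
Proof.
  intros Hg He Hf.
  pose proof (hh_pos g Hg) as hp. pose proof (exp_pos (GG g / 2 * (f - PI / 2))) as Ep.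
  destruct (Req_dec f 0) as [-> | Hf0]; [|destruct (Req_dec f PI) as [-> | HfP]].
  - unfold Phi, qf, Zc, l1, l2; cbn [fst snd]. rewrite sin_0, cos_0, !Rmult_0_r, Rmult_0_l, Rabs_R0.
    destruct (Rlt_dec 0 0); [lra|]. set (e := exp _) in *.
    destruct (Rlt_dec _ _) as [Hc|Hc]; [lra|]. exfalso; apply Hc. nra.
  - unfold Phi, qf, Zc, l1, l2; cbn [fst snd]. rewrite sin_PI, cos_PI, !Rmult_0_r, Rmult_0_l, Rabs_R0.
    destruct (Rlt_dec 0 0); [lra|]. set (e := exp _) in *.
    pose proof (exp_pos (GG g / 2 * (PI - PI / 2))).
    destruct (Rlt_dec _ _) as [Hc|Hc]; [exfalso; nra|lra].
  - assert (Hs : 0 < sin f) by (apply sin_gt_0; lra).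
    assert (Hq : 0 < qf (l1 g eps f, l2 g f)).
    { unfold qf; cbn [fst]. rewrite curve_q by auto.
      apply Rmult_lt_0_compat; [apply Rmult_lt_0_compat|]; auto. apply Rinv_0_lt_compat; lra. }
    unfold Phi. destruct (Rlt_dec 0 (qf (l1 g eps f, l2 g f))) as [_|]; [|lra].
    unfold Af, qf, Zc; cbn [fst snd]. rewrite curve_q by auto.
    replace ((l2 g f + / 2 * g * (/ hh g * sin f * exp (GG g / 2 * (f - PI / 2)))) /
      (hh g * (/ hh g * sin f * exp (GG g / 2 * (f - PI / 2))))) with (tan (PI / 2 - f)).
    + apply atan_tan. lra.
    + unfold tan. rewrite sin_shift, cos_shift. unfold l2, GG. field. repeat split; try lra. apply Rgt_not_eq, exp_pos.
Qed.

Theorem theorem1p1 (g eps f : R) :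
  -2 < g < 2 ->
  (eps = 1 \/ eps = -1) ->
  0 <= f <= PI ->
  Kf g (lcurve g eps f) = 1 /\
  sqrt (det_gmet g (lcurve g eps f)) *
    Rabs (l2 g f * Derive (fun t => l1 g eps t) f
          - l1 g eps f * Derive (fun t => l2 g t) f) = / hh g.
Proof.
  intros Hg He Hf.
  pose proof (hh_pos g Hg) as hp.
  pose proof (curve_B g eps f Hg He Hf) as HB.
  pose proof (curve_Phi g eps f Hg He Hf) as HP.
  pose proof (exp_pos (GG g / 2 * (f - PI / 2))) as Ep.
  assert (Hab : l1 g eps f <> 0 \/ l2 g f <> 0).
  { destruct (Req_dec (l1 g eps f) 0) as [H1|H1]; [|left; exact H1].
    destruct (Req_dec (l2 g f) 0) as [H2|H2]; [|right; exact H2].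
    exfalso. unfold BB in HB. rewrite H1, H2, Rabs_R0 in HB.
    assert (0 < exp (GG g / 2 * (f - PI / 2)) ^ 2) by (apply pow_lt; exact Ep). lra. }
  split.
  - assert (Hv : sqrt (Bf g (l1 g eps f, l2 g f)) * Jf g (l1 g eps f, l2 g f) = 1).
    { rewrite Bf_eq. fold (BB g (l1 g eps f) (l2 g f)). rewrite HB, sqrt_pow2 by lra.
      unfold Jf. rewrite HP, <- exp_plus. rewrite <- exp_0. f_equal. unfold GG. field. lra. }
    unfold Kf, lcurve; cbn [fst snd].
    destruct (Req_EM_T (l1 g eps f) 0); destruct (Req_EM_T (l2 g f) 0); auto.
    exfalso; destruct Hab; auto.
  - unfold lcurve. rewrite det_all by auto. unfold EE. rewrite HP.
    rewrite sqrt_pow2 by (left; apply exp_pos).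
    assert (D1 : Derive (fun t => l1 g eps t) f = eps * / hh g * (cos f + GG g / 2 * sin f) * exp (GG g / 2 * (f - PI / 2))).
    { apply is_derive_unique. unfold l1. auto_derive; [exact I|]. unfold Rminus. field. lra. }
    assert (D2 : Derive (fun t => l2 g t) f = - sin f * (1 + GG g ^ 2 / 4) * exp (GG g / 2 * (f - PI / 2))).
    { apply is_derive_unique. unfold l2. auto_derive; [exact I|]. unfold Rminus. field. }
    rewrite D1, D2.
    assert (W : l2 g f * (eps * / hh g * (cos f + GG g / 2 * sin f) * exp (GG g / 2 * (f - PI / 2))) -
       l1 g eps f * (- sin f * (1 + GG g ^ 2 / 4) * exp (GG g / 2 * (f - PI / 2)))
       = eps * (/ hh g * exp (GG g / 2 * (f - PI / 2)) ^ 2)).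
    { pose proof (sin2_cos2 f) as Hsc. unfold Rsqr in Hsc. unfold l1, l2.
      set (E := exp _). set (s := sin f) in *. set (c := cos f) in *. set (G := GG g). set (h := hh g) in *.
      clearbody E s c G h. field_simplify_eq; [| lra]. clear -Hsc. cbn [pow]. nsatz. }
    rewrite W, Rabs_mult.
    assert (Rabs eps = 1) as -> by (destruct He as [-> | ->]; [apply Rabs_R1 | rewrite Rabs_left; lra]).
    rewrite Rabs_right.
    2: { apply Rle_ge. apply Rmult_le_pos; [left; apply Rinv_0_lt_compat; lra | apply pow2_ge_0]. }
    replace (exp (GG g / 2 * (f - PI / 2)) ^ 2) with (exp (GG g * (f - PI / 2))).
    + replace (exp (GG g * (PI / 2 - f)) * (1 * (/ hh g * exp (GG g * (f - PI / 2)))))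
        with (/ hh g * exp (GG g * (PI / 2 - f) + GG g * (f - PI / 2))) by (rewrite exp_plus; ring).
      replace (GG g * (PI / 2 - f) + GG g * (f - PI / 2)) with 0 by ring. rewrite exp_0. ring.
    + simpl. rewrite Rmult_1_r, <- exp_plus. f_equal. field.
Qed.
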